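(* Let $(V,E)$ be a finite graph with $E\neq\emptyset$ and let $p\in(0,1)$. Let $(\eta_t,\sigma_t)_{t\ge0}$ be a continuous-time Markov jump process on $\{0,1\}^E\times\{-1,1\}^V$ with the following rates: (i) if $\eta'=\eta$ and there is $x\in V$ with $\sigma'=\sigma^x$ and $\eta(e)=0$ for all $e\in E_x$, the rate from $(\eta,\sigma)$ to $(\eta',\sigma')$ is $1$; (ii) if $\sigma'=\sigma$ and there is $e\in E$ with $\eta'=\eta^e$, the rate is $p\mathbf 1_{\eta(e)=0}\delta_\sigma(e)+(1-p)\mathbf 1_{\eta(e)=1}$; (iii) all other off-diagonal rates are $0$. Then $(\eta_t,\sigma_t)_{t\ge0}$ is reversible with respect to $IP$, but neither of its marginal processes $(\eta_t)_{t\ge0}$ and $(\sigma_t)_{t\ge0}$ is a Markov jump process.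
   Context: Edge configurations $\eta\in\{0,1\}^E$, spin configurations $\sigma\in\{-1,1\}^V$. For $e=\langle x,y\rangle$, $\delta_\sigma(e)=\mathbf 1_{\sigma(x)=\sigma(y)}$. $IP(\eta,\sigma)=\frac1Z\prod_{e\in E}\big(p\mathbf 1_{\eta(e)=1}\delta_\sigma(e)+(1-p)\mathbf 1_{\eta(e)=0}\big)$ with $Z$ the normalizing constant. $E_x$ is the set of edges with endvertex $x$; $\sigma^x$ is $\sigma$ with the spin at $x$ flipped; $\eta^e$ is $\eta$ with the value at edge $e$ changed. Reversibility with respect to $IP$ means $IP(a)q(a,b)=IP(b)q(b,a)$ for all states $a,b$, $q$ being the rates. A marginal process (e.g. $(\sigma_t)$) is said to be a Markov jump process if it is a time-homogeneous Markov process for every initial distribution, with transition rates not depending on the initial distribution (lumpability). *)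

(* Defs.v *)
From HB Require Import structures.
From mathcomp Require Import all_boot all_order all_algebra.
From mathcomp Require Import all_classical all_reals all_analysis.
Set Implicit Arguments. Unset Strict Implicit. Unset Printing Implicit Defensive.
Import Order.TTheory GRing.Theory Num.Theory numFieldNormedType.Exports.
Local Open Scope ring_scope.

Section CTMC.
Variables (R : realType) (S : finType).

Definition generator (q : S -> S -> R) (a b : S) : R :=
  if a == b then - \sum_(c | c != a) q a c else q a b.

Fixpoint kpow (Q : S -> S -> R) (k : nat) (a b : S) : R :=
  match k with
  | 0%N => (a == b)%:R
  | k'.+1 => \sum_(c : S) kpow Q k' a c * Q c b
  end.

Definition trans (Q : S -> S -> R) (t : R) (a b : S) : R :=
  limn (series (fun k : nat => t ^+ k / (k`!)%:R * kpow Q k a b)).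

Fixpoint propag (T : eqType) (Q : S -> S -> R) (f : S -> T)
    (mu : S -> R) (dys : seq (R * T)) : S -> R :=
  match dys with
  | [::] => mu
  | (d, y) :: r =>
      propag Q f (fun b => (f b == y)%:R * \sum_(a : S) mu a * trans Q d a b) r
  end.

(* P_mu( f(X_{t_1}) = y_1, ..., f(X_{t_n}) = y_n ) where X is the chain with
   generator Q and initial law mu, t_i = d_1 + ... + d_i, dys = [(d_i, y_i)] *)
Definition fdd (T : eqType) (Q : S -> S -> R) (f : S -> T)
    (mu : S -> R) (dys : seq (R * T)) : R :=
  \sum_(b : S) propag Q f mu dys b.

Definition is_distr (mu : S -> R) : Prop :=
  (forall a, 0 <= mu a) /\ \sum_(a : S) mu a = 1.

Definition reversible (pi : S -> R) (q : S -> S -> R) : Prop :=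
  forall a b, pi a * q a b = pi b * q b a.
End CTMC.

(* The marginal f(X) of the chain with generator Q is a Markov jump process:
   there are rates r on T (not depending on the initial law) such that for every
   initial law mu of X, all finite-dimensional distributions of f(X) agree with
   those of the Markov jump process with rates r started from f_* mu. *)
Definition marginal_is_markov_jump (R : realType) (S T : finType)
    (Q : S -> S -> R) (f : S -> T) : Prop :=
  exists r : T -> T -> R,
    (forall y y', y != y' -> 0 <= r y y') /\
    forall mu : S -> R, is_distr mu ->
    forall dys : seq (R * T), all (fun dy => 0 <= dy.1) dys ->
      fdd Q f mu dys =
      fdd (generator r) id (fun y => \sum_(a | f a == y) mu a) dys.

Section Model.
Variables (R : realType) (V : finType) (G : rel V) (p : R).

Definition is_edge (e : {set V}) : bool :=
  [exists x, exists y, G x y && (e == [set x; y])].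
Definition edge := {e : {set V} | is_edge e}.

(* edge configurations eta : E -> {0,1} (true = 1),
   spin configurations sigma : V -> {-1,1} (true = +1) *)
Definition state := ({ffun edge -> bool} * {ffun V -> bool})%type.

Definition delta (sigma : {ffun V -> bool}) (e : edge) : bool :=
  [forall x in val e, forall y in val e, sigma x == sigma y].

Definition flipV (sigma : {ffun V -> bool}) (x : V) : {ffun V -> bool} :=
  [ffun z => if z == x then ~~ sigma z else sigma z].
Definition flipE (eta : {ffun edge -> bool}) (e : edge) : {ffun edge -> bool} :=
  [ffun g => if g == e then ~~ eta g else eta g].

Definition weight (s : state) : R :=
  \prod_(e : edge) (if s.1 e then p * (delta s.2 e)%:R else 1 - p).
Definition IP (s : state) : R := weight s / \sum_(s' : state) weight s'.

Definition rates (s s' : state) : R :=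
  let: (eta, sigma) := s in let: (eta', sigma') := s' in
  if s == s' then 0
  else if (eta' == eta) &&
          [exists x, (sigma' == flipV sigma x) &&
                     [forall e : edge, (x \in val e) ==> ~~ eta e]]
  then 1
  else if (sigma' == sigma) && [exists e, eta' == flipE eta e] then
    \sum_(e | eta' == flipE eta e)
      (p * (~~ eta e)%:R * (delta sigma e)%:R + (1 - p) * (eta e)%:R)
  else 0.
End Model.

(* Main.v *)
Require Import Defs.
From HB Require Import structures.
From mathcomp Require Import all_boot all_order all_algebra.
From mathcomp Require Import all_classical all_reals all_analysis.
From mathcomp Require Import ring lra.
Import Order.TTheory GRing.Theory Num.Theory numFieldNormedType.Exports.
Local Open Scope ring_scope.
Set Implicit Arguments. Unset Strict Implicit.


Section Analytic.
Variables (R : realType) (S : finType) (Q : S -> S -> R).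

Lemma kpow1 a b : kpow Q 1 a b = Q a b.
Proof.
rewrite /= (bigD1 a) //= eqxx mul1r big1 ?addr0 // => c /negPf.
by rewrite eq_sym => ->; rewrite mul0r.
Qed.

Definition Kb : R := 1 + \sum_c \sum_d `|Q c d|.

Lemma Kb_ge1 : 1 <= Kb.
Proof. by rewrite /Kb lerDl; apply: sumr_ge0 => c _; apply: sumr_ge0. Qed.

Lemma colsum_le b : \sum_c `|Q c b| <= Kb.
Proof.
rewrite /Kb; have H : \sum_c `|Q c b| <= \sum_c \sum_d `|Q c d|; last by lra.
apply: ler_sum => c _; rewrite (bigD1 b) //= lerDl; exact: sumr_ge0.
Qed.

Lemma kpow_bound k a b : `|kpow Q k a b| <= Kb ^+ k.
Proof.
elim: k b => [|k IH] b /=.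
  by rewrite expr0; case: (a == b); rewrite ?normr1 ?normr0.
apply: le_trans (ler_norm_sum _ _ _) _.
have H : \sum_c `|kpow Q k a c * Q c b| <= \sum_c Kb ^+ k * `|Q c b|.
  by apply: ler_sum => c _; rewrite normrM ler_wpM2r.
apply: le_trans H _; rewrite -mulr_sumr exprS mulrC ler_wpM2r //; first exact: exprn_ge0 (le_trans ler01 Kb_ge1).
exact: colsum_le.
Qed.

End Analytic.

Lemma geo_le2 (R : realType) (x : R) m : 0 <= x -> x <= 1/2 -> \sum_(k < m) x ^+ k <= 2.
Proof.
move=> x0 x2; elim: m => [|m IH]; first by rewrite big_ord0.
rewrite big_ord_recl expr0.
have -> : \sum_(i < m) x ^+ lift ord0 i = x * \sum_(i < m) x ^+ i.
  by rewrite mulr_sumr; apply: eq_bigr => i _; rewrite lift0 exprS.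
have : x * \sum_(i < m) x ^+ i <= 1/2 * 2.
  by apply: ler_pM => //; apply: sumr_ge0 => i _; exact: exprn_ge0.
lra.
Qed.

Local Open Scope classical_set_scope.
Local Open Scope ring_scope.


Section Analytic2.
Variables (R : realType) (S : finType) (Q : S -> S -> R).

Definition uu (t : R) a b k := t ^+ k / (k`!)%:R * kpow Q k a b.

Lemma coef_le (t : R) k : 0 <= t -> `|t ^+ k / (k`!)%:R| <= t ^+ k.
Proof.
move=> t0; have f1 : (1 <= (k`!)%:R :> R) by rewrite ler1n fact_gt0.
rewrite ger0_norm; last by apply: divr_ge0; [exact: exprn_ge0|exact: ler0n].
rewrite ler_pdivrMr; last by apply: lt_le_trans f1.
by rewrite ler_peMr // exprn_ge0.
Qed.

Lemma uu_bound t a b k : 0 <= t -> `|uu t a b k| <= (t * Kb Q) ^+ k.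
Proof.
move=> t0; rewrite /uu normrM exprMn; apply: ler_pM => //.
  exact: coef_le.
exact: kpow_bound.
Qed.

Lemma cvg_uu t a b : 0 <= t -> t * Kb Q <= 1/2 -> cvgn (series (uu t a b)).
Proof.
move=> t0 tK; apply: normed_cvg; apply: nondecreasing_is_cvgn.
  have := @nondecreasing_series R (fun k => `|uu t a b k|) xpredT 0.
  by apply => n _ _.
exists 2 => _ [n _ <-] /=.
rewrite /series /=.
apply: le_trans (geo_le2 n _ tK); last by apply: mulr_ge0 => //; apply: le_trans ler01 (Kb_ge1 Q).
rewrite big_mkord; apply: ler_sum => i _; exact: uu_bound.
Qed.

Lemma cvg_seqsum (s : seq S) (g : S -> nat -> R) (l : S -> R) :
  (forall b, g b @ \oo --> l b) ->
  (fun n => \sum_(b <- s) g b n) @ \oo --> \sum_(b <- s) l b.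
Proof.
move=> hg; elim: s => [|b s IH].
  rewrite big_nil; have -> : (fun n => \sum_(b <- [::]) g b n) = fun=> 0.
    by apply: funext => n; rewrite big_nil.
  exact: cvg_cst.
rewrite big_cons; have -> : (fun n => \sum_(b0 <- b :: s) g b0 n) =
   (g b + (fun n => \sum_(b0 <- s) g b0 n)).
  by apply: funext => n; rewrite big_cons.
exact: cvgD.
Qed.

End Analytic2.


Section Key.
Variables (R : realType) (S : finType) (Q : S -> S -> R) (F : pred S) (a a' : S).
Hypotheses (Fa : ~~ F a) (Fa' : ~~ F a').

Definition Dk k := \sum_b (F b)%:R * (kpow Q k a b - kpow Q k a' b).
Definition ww (t : R) k := t ^+ k / (k`!)%:R * Dk k.
Definition C0 : R := 2 * #|S|%:R.

Lemma Dk0 : Dk 0 = 0.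
Proof.
rewrite /Dk big1 // => b _ /=.
have [<-|ab] := eqVneq a b; first by rewrite (negPf Fa) mul0r.
have [<-|a'b] := eqVneq a' b; first by rewrite (negPf Fa') mul0r.
by rewrite subrr mulr0.
Qed.

Lemma Dk_bound k : `|Dk k| <= C0 * Kb Q ^+ k.
Proof.
apply: le_trans (ler_norm_sum _ _ _) _.
have -> : C0 * Kb Q ^+ k = \sum_(b : S) (2 * Kb Q ^+ k).
  rewrite sumr_const /C0.
  have -> : (2 * Kb Q ^+ k) *+ #|S| = (2 * Kb Q ^+ k) * #|S|%:R by rewrite mulr_natr.
  by rewrite mulrAC.
apply: ler_sum => b _; rewrite normrM.
have h1 : `|(F b)%:R : R| <= 1 by case: (F b); rewrite ?normr1 ?normr0.
have h2 : `|kpow Q k a b - kpow Q k a' b| <= 2 * Kb Q ^+ k.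
  apply: le_trans (ler_normB _ _) _.
  have := kpow_bound Q k a b; have := kpow_bound Q k a' b; lra.
rewrite -[X in _ <= X]mul1r; apply: ler_pM => //.
Qed.

Lemma ww_bound t k : 0 <= t -> `|ww t k| <= C0 * (t * Kb Q) ^+ k.
Proof.
move=> t0; rewrite /ww normrM exprMn mulrCA; apply: ler_pM => //.
  exact: coef_le.
exact: Dk_bound.
Qed.

Lemma series_ww t n : series (ww t) n =
  \sum_b (F b)%:R * (series (uu Q t a b) n - series (uu Q t a' b) n).
Proof.
rewrite /series /=.
have -> : \sum_(0 <= k < n) ww t k =
   \sum_(0 <= k < n) \sum_b (F b)%:R * (uu Q t a b k - uu Q t a' b k).
  apply: eq_bigr => k _; rewrite /ww /Dk mulr_sumr; apply: eq_bigr => b _.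
  rewrite /uu; ring.
rewrite exchange_big /=; apply: eq_bigr => b _.
by rewrite -mulr_sumr sumrB.
Qed.

Lemma cvg_ww t : 0 <= t -> t * Kb Q <= 1/2 ->
  series (ww t) @ \oo -->
  \sum_b (F b)%:R * trans Q t a b - \sum_b (F b)%:R * trans Q t a' b.
Proof.
move=> t0 tK.
have -> : series (ww t) = fun n =>
  \sum_b (F b)%:R * (series (uu Q t a b) n - series (uu Q t a' b) n).
  by apply: funext => n; rewrite series_ww.
rewrite -sumrB.
under eq_bigr do rewrite -mulrBr.
apply: cvg_seqsum => b.
apply: cvgMr; apply: cvgB.
  exact: cvg_uu.
exact: cvg_uu.
Qed.


Definition D1 := \sum_b (F b)%:R * (Q a b - Q a' b).

Lemma ww0 t : ww t 0 = 0.
Proof. by rewrite /ww Dk0 mulr0. Qed.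

Lemma ww1 t : ww t 1 = t * D1.
Proof.
rewrite /ww expr1 (_ : (1`!)%:R = 1 :> R) // divr1 /Dk /D1; congr (_ * _); apply: eq_bigr => b _.
by rewrite !kpow1.
Qed.

Lemma series_ww2 t n : series (ww t) n.+2 - t * D1 = \sum_(k < n) ww t k.+2.
Proof.
rewrite /series /= big_nat_recl // big_nat_recl // ww0 ww1 add0r addrC addKr.
by rewrite big_mkord.
Qed.

Lemma tail_bound t n : 0 <= t -> t * Kb Q <= 1/2 ->
  `|series (ww t) n.+2 - t * D1| <= 2 * C0 * (t * Kb Q) ^+ 2.
Proof.
move=> t0 tK; rewrite series_ww2.
have x0 : 0 <= t * Kb Q by apply: mulr_ge0 => //; apply: le_trans ler01 (Kb_ge1 Q).
apply: le_trans (ler_norm_sum _ _ _) _.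
have h : \sum_(k < n) `|ww t k.+2| <= \sum_(k < n) C0 * (t * Kb Q) ^+ 2 * (t * Kb Q) ^+ k.
  apply: ler_sum => k _; rewrite -mulrA -exprD addnC addn2; exact: ww_bound.
apply: le_trans h _; rewrite -mulr_sumr.
have g := geo_le2 n x0 tK.
have c0 : 0 <= C0 * (t * Kb Q) ^+ 2.
  by apply: mulr_ge0; [rewrite /C0; apply: mulr_ge0|exact: exprn_ge0].
have := ler_wpM2l c0 g; lra.
Qed.

Definition Fsum t c := \sum_b (F b)%:R * trans Q t c b.

Lemma key : D1 != 0 -> exists t : R, (0 <= t) /\ (Fsum t a != Fsum t a').
Proof.
move=> D1n0.
set d := `|D1|; have d0 : 0 < d by rewrite normr_gt0.
set k := Kb Q; have k1 : 1 <= k by exact: Kb_ge1.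
have C00 : 0 <= C0 by rewrite /C0; apply: mulr_ge0.
set M := (C0 + 1) * k ^+ 2.
have M1 : 1 <= M.
  rewrite /M -[1]mulr1; apply: ler_pM => //; first lra.
  by rewrite expr2 -[1]mulr1; apply: ler_pM.
set q := d / (4 * (d + 1)).
have q0 : 0 < q by apply: divr_gt0 => //; lra.
have q4 : q <= 1/4.
  rewrite /q ler_pdivrMr; last lra.
  lra.
have q2 : 2 * q < d.
  rewrite /q mulrA ltr_pdivrMr; last lra.
  nra.
set t := q / M.
have M0 : 0 < M by lra.
have t0 : 0 < t by apply: divr_gt0.
have tM : t * M = q by rewrite /t divfK // gt_eqF.
have tk1 : t * k <= t * M.
  apply: ler_wpM2l; first lra.
  have h1 : k <= k ^+ 2 by rewrite expr2; nra.
  have h2 : k ^+ 2 <= M by rewrite /M; have := exprn_ge0 2 (le_trans ler01 k1); nra.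
  lra.
have tK : t * k <= 1/2 by lra.
have tk0 : 0 <= t * k by apply: mulr_ge0; lra.
have small : 2 * C0 * (t * k) ^+ 2 < t * d.
  have ek : C0 * (t * k) ^+ 2 = t * (t * (C0 * k ^+ 2)) by rewrite exprMn; ring.
  have hk : C0 * k ^+ 2 <= M by rewrite /M; have := exprn_ge0 2 (le_trans ler01 k1); nra.
  have e1 : t * (t * (C0 * k ^+ 2)) <= t * (t * M).
    by apply: ler_wpM2l; [lra|apply: ler_wpM2l; lra].
  have e2 : t * (2 * q) < t * d by rewrite ltr_pM2l.
  rewrite tM in e1; lra.
exists t; split; first lra.
rewrite /Fsum -subr_eq0; apply/negP => /eqP L0.
have hc := cvg_ww (ltW t0) tK.
have : `|0 - t * D1| <= 2 * C0 * (t * k) ^+ 2.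
  rewrite -L0; apply: cvgr_to_le (cvg_norm (cvgB hc (cvg_cst (t * D1)))) _.
  near=> n.
  have hn : (2 <= n)%N by near: n; exact: nbhs_infty_ge.
  have -> : n = n.-2.+2 by move: hn; case: (n) => [|[|m]].
  exact: tail_bound (ltW t0) tK.
rewrite sub0r normrN normrM (gtr0_norm t0) -/d.
lra.
Unshelve. all: by end_near.
Qed.

End Key.


Lemma sum_delta (R : realType) (S : finType) (P : pred S) (a : S) :
  \sum_(c | P c) (c == a)%:R = (P a)%:R :> R.
Proof.
rewrite big_mkcond (bigD1 a) //= eqxx big1 ?addr0; first by case: (P a).
by move=> c /negPf ->; case: (P c).
Qed.

Lemma sum_deltaM (R : realType) (S : finType) (a : S) (X : S -> R) :
  \sum_c (c == a)%:R * X c = X a.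
Proof.
rewrite (bigD1 a) //= eqxx mul1r big1 ?addr0 // => c /negPf ->; by rewrite mul0r.
Qed.

Lemma not_mj (R : realType) (S T : finType) (Q : S -> S -> R) (f : S -> T) a a' y :
  f a = f a' -> f a != y ->
  \sum_b (f b == y)%:R * (Q a b - Q a' b) != 0 ->
  ~ marginal_is_markov_jump Q f.
Proof.
move=> faa' fay hD [r [_ H]].
have Fa : ~~ (fun b => f b == y) a by [].
have Fa' : ~~ (fun b => f b == y) a' by rewrite -faa'.
have [t [t0 ht]] := key (Q:=Q) Fa Fa' hD.
have dist c : is_distr (fun d : S => (d == c)%:R : R).
  split; first by move=> d; exact: ler0n.
  by have := sum_delta R predT c.
have hall : all (fun dy => 0 <= dy.1) [:: (t, y)] by rewrite /= t0.
have E c : fdd Q f (fun d : S => (d == c)%:R) [:: (t, y)] = Fsum Q (fun b => f b == y) t c.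
  by rewrite /fdd /Fsum /=; apply: eq_bigr => b _; rewrite sum_deltaM.
have H1 := H _ (dist a) _ hall; have H2 := H _ (dist a') _ hall.
rewrite E in H1; rewrite E in H2.
move/eqP: ht; apply; rewrite H1 H2; congr fdd.
apply: funext => z; rewrite !sum_delta faa' //.
Qed.

Close Scope classical_set_scope.
Local Open Scope ring_scope.


Section ModelLemmas.
Variables (R : realType) (V : finType) (G : rel V) (p : R).
Local Notation edge := (edge G).

Lemma flipV_inv (s : {ffun V -> bool}) x : flipV (flipV s x) x = s.
Proof. by apply/ffunP => z; rewrite !ffunE; case: eqP => // ->; rewrite negbK. Qed.

Lemma flipE_inv (eta : {ffun edge -> bool}) e : flipE (flipE eta e) e = eta.
Proof. by apply/ffunP => z; rewrite !ffunE; case: eqP => // ->; rewrite negbK. Qed.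

Lemma flipV_eq (s : {ffun V -> bool}) x y : (flipV s x == flipV s y) = (x == y).
Proof.
apply/eqP/eqP => [h|->] //; apply/eqP/negPn/negP => xy.
have := congr1 (fun f : {ffun V -> bool} => f x) h; rewrite !ffunE eqxx (negPf xy).
by case: (s x).
Qed.

Lemma flipE_eq (eta : {ffun edge -> bool}) e g : (flipE eta e == flipE eta g) = (g == e).
Proof.
apply/eqP/eqP => [h|->] //; apply/eqP/negPn/negP => ge.
have := congr1 (fun f : {ffun edge -> bool} => f e) h; rewrite !ffunE eqxx eq_sym (negPf ge).
by case: (eta e).
Qed.

Lemma flipV_neq (s : {ffun V -> bool}) x : (flipV s x == s) = false.
Proof.
apply/negP => /eqP h; have := congr1 (fun f : {ffun V -> bool} => f x) h; rewrite !ffunE eqxx.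
by case: (s x).
Qed.

Lemma flipE_neq (eta : {ffun edge -> bool}) e : (flipE eta e == eta) = false.
Proof.
apply/negP => /eqP h; have := congr1 (fun f : {ffun edge -> bool} => f e) h; rewrite !ffunE eqxx.
by case: (eta e).
Qed.

Definition closedAt (eta : {ffun edge -> bool}) x := [forall e : edge, (x \in val e) ==> ~~ eta e].
Definition Pspin (eta : {ffun edge -> bool}) (s : {ffun V -> bool}) eta' s' :=
  (eta' == eta) && [exists x, (s' == flipV s x) && closedAt eta x].
Definition Pedge (eta : {ffun edge -> bool}) (s : {ffun V -> bool}) eta' s' :=
  (s' == s) && [exists e, eta' == flipE eta e].
Definition term (eta : {ffun edge -> bool}) (s : {ffun V -> bool}) e :=
  p * (~~ eta e)%:R * (delta s e)%:R + (1 - p) * (eta e)%:R.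

Lemma rates_eq eta s eta' s' : rates p (eta, s) (eta', s') =
  if (eta, s) == (eta', s') then 0 else if Pspin eta s eta' s' then 1
  else if Pedge eta s eta' s' then \sum_(e | eta' == flipE eta e) term eta s e else 0.
Proof. by []. Qed.

Lemma Pspinsym eta s eta' s' : Pspin eta s eta' s' -> Pspin eta' s' eta s.
Proof.
case/andP => /eqP -> /existsP [x /andP [/eqP -> c]].
by rewrite /Pspin eqxx /=; apply/existsP; exists x; rewrite flipV_inv eqxx.
Qed.

Lemma Pedgesym eta s eta' s' : Pedge eta s eta' s' -> Pedge eta' s' eta s.
Proof.
case/andP => /eqP -> /existsP [e /eqP ->].
by rewrite /Pedge eqxx /=; apply/existsP; exists e; rewrite flipE_inv.
Qed.

Lemma rates_edge eta s e s' :
  rates p (eta, s) (flipE eta e, s') = (s' == s)%:R * term eta s e.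
Proof.
rewrite rates_eq.
have -> : ((eta, s) == (flipE eta e, s')) = false.
  by apply/negP => /eqP [] /esym/eqP; rewrite flipE_neq.
have -> : Pspin eta s (flipE eta e) s' = false by rewrite /Pspin flipE_neq.
rewrite /Pedge; case: (s' == s); last by rewrite mul0r.
have -> : [exists e0, flipE eta e == flipE eta e0] by apply/existsP; exists e.
rewrite mul1r /=; apply: big_pred1 => g; exact: flipE_eq.
Qed.

Lemma rates_spin eta s eta' x :
  rates p (eta, s) (eta', flipV s x) = ((eta' == eta) && closedAt eta x)%:R.
Proof.
rewrite rates_eq.
have -> : ((eta, s) == (eta', flipV s x)) = false.
  by apply/negP => /eqP [] _ /esym/eqP; rewrite flipV_neq.
have -> : Pedge eta s eta' (flipV s x) = false by rewrite /Pedge flipV_neq.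
have -> : Pspin eta s eta' (flipV s x) = (eta' == eta) && closedAt eta x.
  rewrite /Pspin; congr (_ && _); apply/existsP/idP => [[z /andP [] ]|c].
    by rewrite flipV_eq => /eqP ->.
  by exists x; rewrite eqxx.
by case: (_ && _).
Qed.

Lemma weight_spin eta s x : closedAt eta x -> weight p (eta, s) = weight p (eta, flipV s x).
Proof.
move=> /forallP c; apply: eq_bigr => e _ /=.
case he : (eta e) => //.
have xe : x \notin val e by have := c e; rewrite he; case: (x \in val e).
suff -> : delta s e = delta (flipV s x) e by [].
rewrite /delta; apply: eq_forallb => u; case ue: (u \in val e) => //=; apply: eq_forallb => v; case ve: (v \in val e) => //=.
rewrite !ffunE; have -> : (u == x) = false by apply/negP => /eqP ux; move: xe; rewrite -ux ue.
by have -> : (v == x) = false by apply/negP => /eqP vx; move: xe; rewrite -vx ve.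
Qed.

Lemma weight_edge eta s e :
  weight p (eta, s) * term eta s e =
  weight p (flipE eta e, s) * term (flipE eta e) s e.
Proof.
rewrite /weight /= (bigD1 e) //= [in RHS](bigD1 e) //=.
have -> : \prod_(g | g != e) (if flipE eta e g then p * (delta s g)%:R else 1 - p) =
          \prod_(g | g != e) (if eta g then p * (delta s g)%:R else 1 - p).
  by apply: eq_bigr => g ge; rewrite ffunE (negPf ge).
rewrite /term !ffunE eqxx; case: (eta e) => /=; ring.
Qed.

Lemma wrev (a b : state G) : weight p a * rates p a b = weight p b * rates p b a.
Proof.
case: a b => [eta s] [eta' s'].
rewrite !rates_eq.
case h0 : ((eta, s) == (eta', s')).
  by rewrite eq_sym h0 !mulr0.
rewrite eq_sym h0.
case h2 : (Pspin eta s eta' s').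
  rewrite (Pspinsym h2) !mulr1.
  case/andP: h2 => /eqP -> /existsP [x /andP [/eqP -> c]].
  exact: weight_spin.
case h2' : (Pspin eta' s' eta s).
  by move: h2; rewrite (Pspinsym h2').
case h3 : (Pedge eta s eta' s').
  rewrite (Pedgesym h3).
  case/andP: h3 => /eqP -> /existsP [e /eqP ->].
  rewrite (big_pred1 e); last by move=> g; exact: flipE_eq.
  rewrite (big_pred1 e); last first.
    by move=> g; rewrite -{1}(flipE_inv eta e) flipE_eq.
  exact: weight_edge.
case h3' : (Pedge eta' s' eta s); last by rewrite !mulr0.
  by move: h3; rewrite (Pedgesym h3').
Qed.

Lemma rev_IP : reversible (@IP R V G p) (@rates R V G p).
Proof.
move=> a b; rewrite /IP mulrAC [RHS]mulrAC; congr (_ / _); exact: wrev.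
Qed.

End ModelLemmas.


Theorem theorem1 (R : realType) (V : finType) (G : rel V)
    (G_sym : symmetric G) (G_irr : irreflexive G)
    (E_nonempty : exists x y, G x y)
    (p : R) (hp0 : 0 < p) (hp1 : p < 1) :
  reversible (@IP R V G p) (@rates R V G p) /\
  ~ marginal_is_markov_jump (generator (@rates R V G p)) fst /\
  ~ marginal_is_markov_jump (generator (@rates R V G p)) snd.
Proof.
split; first exact: rev_IP.
have [x0 [y0 Gxy]] := E_nonempty.
have x0y0 : (y0 == x0) = false.
  by apply/negP => /eqP e; move: Gxy; rewrite e G_irr.
have ise : is_edge G [set x0; y0].
  by apply/existsP; exists x0; apply/existsP; exists y0; rewrite Gxy eqxx.
pose e0 : edge G := exist _ [set x0; y0] ise.
have x0e : x0 \in val e0 by rewrite /= set21.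
have y0e : y0 \in val e0 by rewrite /= set22.
pose eta0 : {ffun edge G -> bool} := [ffun => false].
pose eta1 : {ffun edge G -> bool} := [ffun => true].
split.
- pose s1 : {ffun V -> bool} := [ffun => true].
  pose s2 : {ffun V -> bool} := [ffun z => z == x0].
  have d1 : delta s1 e0.
    by apply/forallP => u; apply/implyP => _; apply/forallP => v; apply/implyP => _; rewrite !ffunE.
  have d2 : delta s2 e0 = false.
    apply/negP => /forallP /(_ x0) /implyP /(_ x0e) /forallP /(_ y0) /implyP /(_ y0e).
    by rewrite !ffunE eqxx x0y0.
  apply: (@not_mj R _ _ _ fst (eta0, s1) (eta0, s2) (flipE eta0 e0)) => //.
    by rewrite /= eq_sym flipE_neq.
  have -> : \sum_b ((b : state G).1 == flipE eta0 e0)%:R *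
      (generator (rates p) (eta0, s1) b - generator (rates p) (eta0, s2) b) =
      \sum_b (b == (flipE eta0 e0, s1))%:R * p.
    apply: eq_bigr => -[eta' s'] _ /=.
    case he : (eta' == flipE eta0 e0); last first.
      rewrite mul0r; case: eqP => [[]|]; last by rewrite mul0r.
      by move=> e; move: he; rewrite e eqxx.
    move/eqP: he => ->; rewrite mul1r /generator.
    have -> : ((eta0, s1) == (flipE eta0 e0, s')) = false.
      by apply/negP => /eqP [] /esym/eqP; rewrite flipE_neq.
    have -> : ((eta0, s2) == (flipE eta0 e0, s')) = false.
      by apply/negP => /eqP [] /esym/eqP; rewrite flipE_neq.
    rewrite !rates_edge /term d1 d2 !ffunE /= xpair_eqE eqxx /=.
    by case: (s' == s1); case: (s' == s2) => /=; ring.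
  by rewrite sum_deltaM gt_eqF.
- pose s : {ffun V -> bool} := [ffun => true].
  have c0 : closedAt eta0 x0 by apply/forallP => e; rewrite ffunE implybT.
  have c1 : closedAt eta1 x0 = false.
    by apply/negP => /forallP /(_ e0); rewrite x0e ffunE.
  apply: (@not_mj R _ _ _ snd (eta0, s) (eta1, s) (flipV s x0)) => //.
    by rewrite /= eq_sym flipV_neq.
  have -> : \sum_b ((b : state G).2 == flipV s x0)%:R *
      (generator (rates p) (eta0, s) b - generator (rates p) (eta1, s) b) =
      \sum_b (b == (eta0, flipV s x0))%:R * 1.
    apply: eq_bigr => -[eta' s'] _ /=.
    case he : (s' == flipV s x0); last first.
      rewrite mul0r; case: eqP => [[]|]; last by rewrite mul0r.
      by move=> _ e; move: he; rewrite e eqxx.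
    move/eqP: he => ->; rewrite mul1r /generator.
    have -> : ((eta0, s) == (eta', flipV s x0)) = false.
      by apply/negP => /eqP [] _ /esym/eqP; rewrite flipV_neq.
    have -> : ((eta1, s) == (eta', flipV s x0)) = false.
      by apply/negP => /eqP [] _ /esym/eqP; rewrite flipV_neq.
    rewrite !rates_spin c0 c1 xpair_eqE eqxx !andbT andbF /=.
    by case: (eta' == eta0) => /=; ring.
  by rewrite sum_deltaM oner_eq0.
Qed.
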